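(* Let $N$ be a positive integer and $L,Q,R,S$ constant complex $N\times N$ matrices, $H=\begin{pmatrix}R&Q\\S&L\end{pmatrix}$, $H^n=\begin{pmatrix}R_n&Q_n\\S_n&L_n\end{pmatrix}$. Fix a sign $\pm$. If the $N\times N$ matrix function $\Phi$ of $\mathbf{t}=(t_1,t_2,t_3,\ldots)$ solves the Riccati hierarchy $\Phi_{t_n}=S_n+L_n\Phi-\Phi R_n-\Phi Q_n\Phi$ ($n=1,2,3,\ldots$) with data $(L,R,Q,S)$, then $\pm\Phi^\intercal\circ\varepsilon$ solves the Riccati hierarchy with data $(-R^\intercal,-L^\intercal,\pm Q^\intercal,\pm S^\intercal)$ in place of $(L,R,Q,S)$ (i.e. the transformation $L\mapsto-R^\intercal$, $R\mapsto-L^\intercal$, $Q\mapsto\pm Q^\intercal$, $S\mapsto\pm S^\intercal$, $\Phi\mapsto\pm\Phi^\intercal\circ\varepsilon$ leaves the Riccati hierarchy invariant), where $\varepsilon(t_1,t_2,t_3,t_4,\ldots)=(t_1,-t_2,t_3,-t_4,\ldots)$.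
   Context: ${}^\intercal$ denotes the transpose. For the transformed data, the matrices $R_n,Q_n,S_n,L_n$ in the hierarchy are the blocks of the $n$-th power of the transformed matrix $H$. *)

(* Defs.v *)
From HB Require Import structures.
From mathcomp Require Import all_boot all_order all_algebra.
From mathcomp Require Import complex.
From mathcomp Require Import all_classical all_reals all_analysis.
Set Implicit Arguments. Unset Strict Implicit. Unset Printing Implicit Defensive.
Import Order.TTheory GRing.Theory Num.Theory.
Import numFieldNormedType.Exports.
Local Open Scope ring_scope.

(* Times t = (t_1, t_2, t_3, ...) are encoded as t : nat -> K with
   t k = t_{k+1}. *)

Definition tshift (K : numFieldType) (t : nat -> K) (n : nat) (s : K) : nat -> K :=
  fun k => if k == n then t k + s else t k.

Definition teps (K : numFieldType) (t : nat -> K) : nat -> K :=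
  fun k => (-1) ^+ k * t k.

Definition is_pderiv (K : numFieldType) (N : nat) (Phi : (nat -> K) -> 'M[K]_N)
  (n : nat) (t : nat -> K) (D : 'M[K]_N) : Prop :=
  forall i j, is_derive (0 : K) (1 : K) (fun s : K => Phi (tshift t n s) i j) (D i j).

Definition Hmx (K : numFieldType) (N : nat) (L R Q S : 'M[K]_N) : 'M[K]_(N + N) :=
  block_mx R Q S L.

Definition Rn (K : numFieldType) N (L R Q S : 'M[K]_N) m := ulsubmx (Hmx L R Q S ^+ m).
Definition Qn (K : numFieldType) N (L R Q S : 'M[K]_N) m := ursubmx (Hmx L R Q S ^+ m).
Definition Sn (K : numFieldType) N (L R Q S : 'M[K]_N) m := dlsubmx (Hmx L R Q S ^+ m).
Definition Ln (K : numFieldType) N (L R Q S : 'M[K]_N) m := drsubmx (Hmx L R Q S ^+ m).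

Definition riccati_hierarchy (K : numFieldType) (N : nat) (L R Q S : 'M[K]_N)
  (Phi : (nat -> K) -> 'M[K]_N) : Prop :=
  forall (n : nat) (t : nat -> K),
    let m := n.+1 in
    is_pderiv Phi n t
      (Sn L R Q S m + Ln L R Q S m *m Phi t - Phi t *m Rn L R Q S m
       - Phi t *m Qn L R Q S m *m Phi t).

(* Main.v *)
Require Import Defs.
From HB Require Import structures.
From mathcomp Require Import all_boot all_order all_algebra.
From mathcomp Require Import complex.
From mathcomp Require Import all_classical all_reals all_analysis.
Import Order.TTheory GRing.Theory Num.Theory.
Import numFieldNormedType.Exports.
Local Open Scope ring_scope.
Lemma der_scale (K : numFieldType) (f : K -> K) (c D : K) :
  is_derive (0:K) (1:K) f D -> is_derive (0:K) (1:K) (fun s => f (c * s)) (c * D).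
Proof.
move=> [df <-].
have dif : differentiable f 0 by apply/derivable1_diffP.
have dg : differentiable ( *:%R c : K -> K) 0 by apply: ex_diff.
have dfg : differentiable (f \o ( *:%R c)) 0.
  apply: differentiable_comp => //; by rewrite scaler0.
have e : (fun s => f (c * s)) = f \o ( *:%R c) by [].
rewrite e; apply: DeriveDef; first exact/derivable1_diffP.
rewrite deriveE // diff_comp // scaler0 /=.
rewrite (diff1E dif) diff_val /= derive1E deriveE //.
- by rewrite /GRing.scale /= mulr1.
- by [].

Qed.

Lemma Hpow (K : numFieldType) N (L R Q S : 'M[K]_N) (sg : K) (hsg : sg * sg = 1) m :
  Hmx (-R^T) (-L^T) (sg*:Q^T) (sg*:S^T) ^+ m =
  block_mx ((-1)^+m *: (Ln L R Q S m)^T) (((-1)^+m * - sg) *: (Qn L R Q S m)^T)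
           (((-1)^+m * - sg) *: (Sn L R Q S m)^T) ((-1)^+m *: (Rn L R Q S m)^T).
Proof.
rewrite /Ln /Qn /Sn /Rn.
elim: m => [|m IH].
  rewrite !expr0 !scale1r !mul1r -[1 : 'M[K]_(N+N)]/(1%:M) scalar_mx_block.
  rewrite block_mxKul block_mxKur block_mxKdl block_mxKdr !trmx1 !trmx0.
  by rewrite scaler0.
rewrite exprSr IH [Hmx L R Q S ^+ m.+1]exprS.
move: (Hmx L R Q S ^+ m) => M.
rewrite -[M in RHS]submxK.
rewrite [in RHS]/Hmx -!mulmxE !mulmx_block.
rewrite block_mxKul block_mxKur block_mxKdl block_mxKdr.
rewrite !linearD /= !trmx_mul.
rewrite ?mulmxN ?mulNmx -?scalemxAl -?scalemxAr ?scalerA ?opprK ?trmxK.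
rewrite !exprS ?scalerDr ?scalerA.
rewrite -!scaleNr.
have e1 : (-1) ^+ m * - sg * sg = - (-1)^+m.
  by rewrite -mulrA mulNr hsg mulrN1.
rewrite e1.
congr block_mx; rewrite addrC; congr (_ *: _ + _ *: _);
  rewrite ?mulN1r ?mulNr ?mulrN ?opprK //.
all: by rewrite /GRing.scale /= mulNr mulrN opprK.
Qed.

Lemma Hblocks (K : numFieldType) N (L R Q S : 'M[K]_N) (sg : K) (hsg : sg * sg = 1) m :
  [/\ Sn (-R^T) (-L^T) (sg*:Q^T) (sg*:S^T) m = ((-1)^+m * - sg) *: (Sn L R Q S m)^T,
      Qn (-R^T) (-L^T) (sg*:Q^T) (sg*:S^T) m = ((-1)^+m * - sg) *: (Qn L R Q S m)^T,
      Rn (-R^T) (-L^T) (sg*:Q^T) (sg*:S^T) m = (-1)^+m *: (Ln L R Q S m)^T &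
      Ln (-R^T) (-L^T) (sg*:Q^T) (sg*:S^T) m = (-1)^+m *: (Rn L R Q S m)^T].
Proof.
rewrite /Sn /Qn /Rn /Ln (@Hpow K N L R Q S sg hsg m).
by rewrite block_mxKul block_mxKur block_mxKdl block_mxKdr.
Qed.

Lemma EMlem (K : numFieldType) N (L R Q S P : 'M[K]_N) (sg : K) (hsg : sg * sg = 1) n :
  Sn (- R^T) (- L^T) (sg *: Q^T) (sg *: S^T) n.+1 +
   Ln (- R^T) (- L^T) (sg *: Q^T) (sg *: S^T) n.+1 *m (sg *: P^T) -
   (sg *: P^T) *m Rn (- R^T) (- L^T) (sg *: Q^T) (sg *: S^T) n.+1 -
   (sg *: P^T) *m Qn (- R^T) (- L^T) (sg *: Q^T) (sg *: S^T) n.+1 *m (sg *: P^T)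
  = (sg * (-1)^+n) *: (Sn L R Q S n.+1 + Ln L R Q S n.+1 *m P - P *m Rn L R Q S n.+1
       - P *m Qn L R Q S n.+1 *m P)^T.
Proof.
have [-> -> -> ->] := @Hblocks _ N L R Q S sg hsg n.+1.
move: (Sn L R Q S n.+1) (Qn L R Q S n.+1) (Rn L R Q S n.+1) (Ln L R Q S n.+1) => Sm Qm Rm Lm.
rewrite !linearD !linearN /= !trmx_mul.
rewrite ?mulmxN ?mulNmx -?scalemxAl -?scalemxAr ?scalerA ?scalerDr ?scalerN ?scalerA.
rewrite hsg scale1r -scalemxAl mulmxA exprS.
move: ((-1) ^+ n) => c.
have k1 : -1 * c * - sg = sg * c by rewrite mulN1r mulrNN mulrC.
have k2 : -1 * c * sg = - (sg * c) by rewrite mulN1r mulNr mulrC.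
have k3 : sg * (-1 * c) = - (sg * c) by rewrite mulN1r mulrN.
rewrite k1 k2 k3 !scaleNr opprK.
congr (_ - _); rewrite -!addrA; congr (_ + _); exact: addrC.
Qed.

Lemma EMentry (K : numFieldType) N (L R Q S P : 'M[K]_N) (sg : K) (hsg : sg * sg = 1) n i j :
  sg * ((-1)^+n * (Sn L R Q S n.+1 + Ln L R Q S n.+1 *m P - P *m Rn L R Q S n.+1
       - P *m Qn L R Q S n.+1 *m P) j i) =
  (Sn (- R^T) (- L^T) (sg *: Q^T) (sg *: S^T) n.+1 +
   Ln (- R^T) (- L^T) (sg *: Q^T) (sg *: S^T) n.+1 *m (sg *: P^T) -
   (sg *: P^T) *m Rn (- R^T) (- L^T) (sg *: Q^T) (sg *: S^T) n.+1 -
   (sg *: P^T) *m Qn (- R^T) (- L^T) (sg *: Q^T) (sg *: S^T) n.+1 *m (sg *: P^T)) i j.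
Proof. by rewrite EMlem // !mxE mulrA. Qed.

Theorem lemma5p1 (R0 : realType) (N : nat) (hN : (0 < N)%N)
  (L R Q S : 'M[R0[i]]_N) (sg : R0[i]) (hsg : sg = 1 \/ sg = -1)
  (Phi : (nat -> R0[i]) -> 'M[R0[i]]_N) :
  riccati_hierarchy L R Q S Phi ->
  riccati_hierarchy (- R^T) (- L^T) (sg *: Q^T) (sg *: S^T)
    (fun t => sg *: (Phi (teps t))^T).
Proof.
have hsg2 : sg * sg = 1 by case: hsg => ->; rewrite ?mulr1 ?mulrNN ?mulr1.
move=> H n t /= i j.
have h1 := @der_scale _ _ ((-1)^+n) _ (H n (teps t) j i).
have h2 := is_deriveZ sg h1.
have ef : (fun s => (sg *: (Phi (teps (tshift t n s)))^T) i j) =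
   (sg \*: (fun s => Phi (tshift (teps t) n ((-1)^+n * s)) j i)).
  apply/funext => s /=; rewrite !mxE; congr (_ * _).
  have -> : teps (tshift t n s) = tshift (teps t) n ((-1)^+n * s); last by [].
  apply/funext => k; rewrite /teps /tshift.
  case: eqP => [->|_] //; by rewrite mulrDr.
rewrite ef; apply: (is_derive_eq h2).
exact: (@EMentry _ N L R Q S (Phi (teps t)) sg hsg2 n i j).
Qed.
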